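(* For every $d\ge1$ and every $\mathbf{u}\in\binom{\mathbb{N}}{d}$ one has $\mathrm{Inc}(C(\mathbf{u}))=C(\mathbf{u}+\mathbf{1})$.
   Context: $\mathbb{N}=\{1,2,3,\dots\}$. For $d\ge1$, $\binom{\mathbb{N}}{d}$ is the set of $d$-element subsets of $\mathbb{N}$; an element is written $\mathbf{u}=(u_1,\ldots,u_d)$ with $u_1<\cdots<u_d$. The squashed order on $\binom{\mathbb{N}}{d}$: $\mathbf{u}<\mathbf{v}$ iff the largest element of the symmetric difference $(\mathbf{u}\setminus\mathbf{v})\cup(\mathbf{v}\setminus\mathbf{u})$ belongs to $\mathbf{v}$. For $\mathbf{u}\in\binom{\mathbb{N}}{d}$, $C(\mathbf{u})=\{\mathbf{v}\in\binom{\mathbb{N}}{d}\mid \mathbf{v}\le\mathbf{u}\}$ (squashed order), and $\mathbf{u}+\mathbf{1}=(u_1+1,\ldots,u_d+1)$. Let $\mathrm{Inc}_1$ be the set of maps $\pi\colon\mathbb{N}\to\mathbb{N}$ with $\pi(j)<\pi(j+1)$ and $\pi(j)\le j+1$ for all $j\ge1$, acting by $\pi(\mathbf{u})=(\pi(u_1),\ldots,\pi(u_d))$. For $\mathcal{F}\subseteq\binom{\mathbb{N}}{d}$, $\mathrm{Inc}(\mathcal{F})=\{\pi(\mathbf{u})\mid \mathbf{u}\in\mathcal{F},\ \pi\in\mathrm{Inc}_1\}$. *)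

(* Defs.v *)
From mathcomp Require Import all_boot.
Set Implicit Arguments. Unset Strict Implicit. Unset Printing Implicit Defensive.

(* An element of binom(N,d), N = {1,2,...}: a strictly increasing list of
   positive naturals of length d (u_1 < ... < u_d). *)
Definition is_dsub (d : nat) (u : seq nat) : bool :=
  [&& sorted ltn u, all (fun x => 0 < x) u & size u == d].

(* symmetric difference of u and v (as a list, possibly with repetitions) *)
Definition symdiff (u v : seq nat) : seq nat :=
  [seq x <- u ++ v | (x \in u) != (x \in v)].

Definition squashed_lt (u v : seq nat) : bool :=
  (symdiff u v != [::]) && ((\max_(x <- symdiff u v) x) \in v).

Definition squashed_le (u v : seq nat) : bool := (u == v) || squashed_lt u v.

Definition Cset (d : nat) (u : seq nat) : seq nat -> Prop :=
  fun v => is_dsub d v /\ squashed_le v u.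

Definition add1 (u : seq nat) : seq nat := map S u.

(* Inc_1: maps pi : N -> N with pi j < pi (j+1) and pi j <= j+1 for j >= 1.
   Only values on N = {1,2,...} matter; pi maps N into N. *)
Definition Inc1 (pi : nat -> nat) : Prop :=
  forall j, 1 <= j -> [/\ 0 < pi j, pi j < pi j.+1 & pi j <= j.+1].

Definition IncF (F : seq nat -> Prop) : seq nat -> Prop :=
  fun v => exists u pi, [/\ F u, Inc1 pi & v = map pi u].

(* Main.v *)
Require Import Defs.
From mathcomp Require Import all_boot.
From mathcomp Require Import zify.
Set Implicit Arguments. Unset Strict Implicit.

Lemma max_mem (s : seq nat) : s != [::] -> \max_(x <- s) x \in s.
Proof.
elim: s => // a s IH _; rewrite big_cons in_cons.
case: s IH => [|b s] IH; first by rewrite big_nil maxn0 eqxx.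
have /IH H : b :: s != [::] by [].
rewrite /maxn; case: ltnP => _; first by rewrite H orbT.
by rewrite eqxx.
Qed.

Lemma max_ge (s : seq nat) x : x \in s -> x <= \max_(y <- s) y.
Proof.
elim: s => // a s IH; rewrite big_cons in_cons => /orP [/eqP->|/IH h].
  exact: leq_maxl.
exact: leq_trans h (leq_maxr _ _).
Qed.

Definition ltm (v u : seq nat) := exists x, [/\ x \in u, x \notin v &
   forall y, x < y -> (y \in v) = (y \in u)].

Lemma mem_symdiff v u y : (y \in symdiff v u) = ((y \in v) != (y \in u)).
Proof.
rewrite /symdiff mem_filter mem_cat.
by case: (y \in v); case: (y \in u).
Qed.

Lemma squashed_ltm v u : squashed_lt v u <-> ltm v u.
Proof.
rewrite /squashed_lt; split.
  case/andP => ne hm; exists (\max_(x <- symdiff v u) x).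
  have := max_mem ne; rewrite mem_symdiff hm.
  case: (_ \in v) => // _; split => // y hy.
  apply/eqP; apply: contraTT hy => h.
  rewrite -leqNgt; apply: max_ge; rewrite mem_symdiff; by case: (y \in v) h; case: (y \in u).
case=> x [xu xv hx].
have xs : x \in symdiff v u by rewrite mem_symdiff xu (negPf xv).
have ne : symdiff v u != [::] by apply/eqP => e; rewrite e in xs.
rewrite ne /=.
have := max_ge xs; rewrite leq_eqVlt => /orP [/eqP <- //|lt].
have := max_mem ne; rewrite mem_symdiff (hx _ lt) eqxx //.
Qed.

Definition gtr : rel nat := fun a b => b < a.
Lemma gtr_trans : transitive gtr.
Proof. move=> a b c; rewrite /gtr => h1 h2; exact: ltn_trans h2 h1. Qed.

Fixpoint lexle (s t : seq nat) : bool :=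
  match s, t with
  | [::], _ => true
  | _ :: _, [::] => false
  | x :: s', y :: t' => (x < y) || ((x == y) && lexle s' t')
  end.

Lemma lexle_refl s : lexle s s.
Proof. by elim: s => //= x s ->; rewrite eqxx orbT. Qed.

Lemma lexle_trans a b c : lexle a b -> lexle b c -> lexle a c.
Proof.
elim: a b c => // x a IH [|y b] [|z c] //=.
case/orP => [h1|/andP [/eqP -> h1]]; case/orP => [h2|/andP [/eqP <- h2]].
- by rewrite (ltn_trans h1 h2).
- by rewrite h1.
- by rewrite h2.
- by rewrite ltnn eqxx (IH _ _ h1 h2).
Qed.

Lemma lexle_S a b : lexle (map S a) (map S b) = lexle a b.
Proof. by elim: a b => // x a IH [|y b] //=; rewrite ltnS eqSS IH. Qed.

Lemma dec_all x s : path gtr x s -> forall z, z \in s -> z < x.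
Proof. move=> /(order_path_min gtr_trans) /allP h z /h //. Qed.

Lemma lex_ltm V U : sorted gtr V -> sorted gtr U -> size V = size U ->
  (V = U \/ ltm V U) <-> lexle V U.
Proof.
elim: V U => [|x s IH] [|y t] //=; first by split => // _; left.
move=> pV pU [sz].
have sV := path_sorted pV; have sU := path_sorted pU.
have aV := dec_all pV; have aU := dec_all pU.
split.
  case=> [[-> ->]|]; first by rewrite ltnn eqxx lexle_refl orbT.
  case=> z [zU zV hz].
  case: (ltngtP x y) => //= hxy.
    have := hz x; rewrite in_cons eqxx /= => h.
    have : z <= y by move: zU; rewrite in_cons => /orP [/eqP->|/aU /ltnW].
    move=> zy.
    have xz : z < x.
      rewrite ltn_neqAle (leq_trans zy (ltnW hxy)) andbT.
      by apply: contraNneq zV => ->; rewrite in_cons eqxx.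
    move: (h xz); rewrite in_cons; case: eqP => [e|_] /=.
      by rewrite e ltnn in hxy.
    move=> /esym /aU; rewrite ltnNge (ltnW hxy) //.
  subst y; rewrite ?eqxx /=; apply/(IH t sV sU sz); right; exists z.
  have zx : z != x by apply: contraNneq zV => ->; rewrite in_cons eqxx.
  move: zU zV; rewrite !in_cons (negPf zx) /= => zU zV; split => // w zw.
  have := hz w zw; rewrite !in_cons; case: eqP => [->|] //= _.
  have /negPf -> : x \notin s by apply/negP => /aV; rewrite ltnn.
  have /negPf -> : x \notin t by apply/negP => /aU; rewrite ltnn.
  by [].
case/orP => [hxy|/andP [/eqP e h]].
  right; exists y; split; first by rewrite in_cons eqxx.
    rewrite in_cons negb_or; apply/andP; split.
      by rewrite eq_sym neq_ltn hxy.
    by apply/negP => /aV h; move: (ltn_trans h hxy); rewrite ltnn.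
  move=> w yw; rewrite !in_cons.
  have wy : (w == y) = false by apply/negbTE; rewrite neq_ltn yw orbT.
  have wx : (w == x) = false by apply/negbTE; rewrite neq_ltn (ltn_trans hxy yw) orbT.
  rewrite wx wy /=.
  have /negPf -> : w \notin s by apply/negP => /aV h1; move: (ltn_trans h1 (ltn_trans hxy yw)); rewrite ltnn.
  have /negPf -> : w \notin t by apply/negP => /aU h1; move: (ltn_trans h1 yw); rewrite ltnn.
  by [].
subst y; case/(IH t sV sU sz): h => [->|[z [zU zV hz]]]; first by left.
right; exists z.
have zx : z != x by apply/negP => /eqP ez; move: (aU _ zU); rewrite ez ltnn.
rewrite !in_cons (negPf zx) /=; split => // w zw; rewrite !in_cons.
by case: (w == x) => //=; apply: hz.
Qed.

Lemma sorted_rev_gtr (s : seq nat) : sorted ltn s -> sorted gtr (rev s).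
Proof. by rewrite rev_sorted. Qed.

Lemma sq_le_lex d v u : is_dsub d v -> is_dsub d u ->
  squashed_le v u <-> lexle (rev v) (rev u).
Proof.
case/and3P => sv _ /eqP szv; case/and3P => su _ /eqP szu.
have szr : size (rev v) = size (rev u) by rewrite !size_rev szv szu.
apply: (iff_trans _ (lex_ltm (sorted_rev_gtr sv) (sorted_rev_gtr su) szr)).
rewrite /squashed_le; split.
  case/orP => [/eqP ->|/squashed_ltm [x [h1 h2 h3]]]; first by left.
  right; exists x; rewrite !mem_rev; split => // y /h3; by rewrite !mem_rev.
case=> [e|[x [h1 h2 h3]]].
  by have := congr1 rev e; rewrite !revK => ->; rewrite eqxx.
apply/orP; right; apply/squashed_ltm; exists x; move: h1 h2; rewrite !mem_rev => h1 h2.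
split => // y /h3; by rewrite !mem_rev.
Qed.

Lemma path_mono_in (f : nat -> nat) (A : pred nat) x s :
  (forall a b, A a -> A b -> a < b -> f a < f b) ->
  A x -> all A s -> path ltn x s -> path ltn (f x) (map f s).
Proof.
move=> hf; elim: s x => //= y s IH x Ax /andP [Ay As] /andP [xy p].
by rewrite (hf _ _ Ax Ay xy) (IH _ Ay As p).
Qed.

Lemma sorted_mono_in (f : nat -> nat) (A : pred nat) s :
  (forall a b, A a -> A b -> a < b -> f a < f b) ->
  all A s -> sorted ltn s -> sorted ltn (map f s).
Proof.
case: s => //= x s hf /andP [Ax As] p; exact: path_mono_in hf Ax As p.
Qed.

Lemma pi_mono pi : Inc1 pi -> forall x y, 0 < x -> x < y -> pi x < pi y.
Proof.
move=> hp x y x0; elim: y => // y IH; rewrite ltnS leq_eqVlt => /orP [/eqP <-|h].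
  by case: (hp x x0).
have y1 : 1 <= y by lia.
case: (hp y y1) => _ h2 _; exact: ltn_trans (IH h) h2.
Qed.

Lemma lex_pi pi W : Inc1 pi -> all (fun x => 0 < x) W ->
  lexle (map pi W) (map S W).
Proof.
move=> hp; elim: W => //= x W IH /andP [x0 aW].
case: (hp x x0) => _ _; rewrite leq_eqVlt => /orP [/eqP ->|->] //.
by rewrite ltnn eqxx IH.
Qed.

Lemma head_ge y t : path gtr y t -> all (fun x => 0 < x) (y :: t) -> size t < y.
Proof.
elim: t y => [|z t IH] y /=; first by rewrite andbT.
case/andP => yz p /and3P [y0 z0 aT].
have := IH z p; rewrite /= z0 aT => /(_ isT) h; exact: leq_ltn_trans h yz.
Qed.

Lemma lexC V U : sorted gtr V -> all (fun x => x <= size V) V ->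
  sorted gtr U -> all (fun x => 0 < x) U -> size V = size U -> lexle V U.
Proof.
elim: V U => [|x s IH] [|y t] //= pV /andP [xs aV] pU aU [sz].
have := head_ge pU aU => ty.
case: ltngtP => //= h.
  by move: h; rewrite -sz in ty; lia.
subst y; apply: IH => //; [exact: path_sorted pV| |exact: path_sorted pU|by case/andP: aU].
apply/allP => z zs; have := dec_all pV zs.
move: xs => xs zx; lia.
Qed.

Definition gk k x := if x <= k then x.+1 else x.

Lemma key k V U : sorted gtr V -> all (fun x => 0 < x) V ->
  sorted gtr U -> all (fun x => 0 < x) U -> size V = size U ->
  (forall x, x \in V -> x <= k -> forall j, 0 < j -> j < x -> j \in V) ->
  lexle V (map S U) -> lexle (map (gk k) V) (map S U).
Proof.
elim: V U => [|x s IH] [|y t] // pV aV0 pU aU sz0 hP.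
case/andP: aV0 => x0 aV; case: sz0 => sz.
have xV : x \in x :: s by rewrite in_cons eqxx.
have sV := path_sorted pV.
case: (leqP x k) => xk.
  have -> : map (gk k) (x :: s) = map S (x :: s).
    apply/eq_in_map => z; rewrite in_cons => /orP [/eqP ->|zs].
      by rewrite /gk xk.
    have := dec_all pV zs => zx; rewrite /gk; have -> : z <= k by lia. by [].
  move=> _; rewrite lexle_S; apply: lexC => //; last by rewrite /= sz.
  have hs : x.-1 <= size s.
    have -> : x.-1 = size (iota 1 x.-1) by rewrite size_iota.
    apply: uniq_leq_size; first exact: iota_uniq.
    move=> j; rewrite mem_iota => /andP [j1 jx].
    have := hP x xV xk j j1 ltac:(lia); rewrite in_cons => /orP [/eqP e|//].
    by lia.
  rewrite /=; apply/andP; split; first by lia.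
  apply/allP => z zs; have := dec_all pV zs; lia.
have gx : gk k x = x by rewrite /gk leqNgt xk.
rewrite /= gx; case/orP => [->//|/andP [/eqP e h]]; apply/orP; right; rewrite e eqxx /=.
apply: IH => //; [exact: path_sorted pU|by case/andP: aU|].
move=> z zs zk j j0 jz.
have zx := dec_all pV zs.
have := hP z ltac:(by rewrite in_cons zs orbT) zk j j0 jz.
rewrite in_cons => /orP [/eqP ej|//]; lia.
Qed.

Lemma dsub_add1 d u : is_dsub d u -> is_dsub d (add1 u).
Proof.
case/and3P => su au /eqP sz; apply/and3P; split.
- apply: (@sorted_mono_in S (fun x => 0 < x)) => //.
- by rewrite all_map; apply/allP.
- by rewrite size_map sz.
Qed.

Lemma dir1 d u v : is_dsub d u -> IncF (Cset d u) v -> Cset d (add1 u) v.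
Proof.
move=> du [w [pi [[dw le] hp ->]]].
have du1 := dsub_add1 du.
have dv : is_dsub d (map pi w).
  case/and3P: dw => sw aw /eqP sz; apply/and3P; split.
  - apply: (@sorted_mono_in pi (fun x => 0 < x)) => // a b a0 _; exact: pi_mono.
  - rewrite all_map; apply/allP => x /(allP aw) x0 /=; by case: (hp x x0).
  - by rewrite size_map sz.
split => //; apply/(sq_le_lex dv du1).
move/(sq_le_lex dw du): le => le.
rewrite /add1 -!map_rev; apply: lexle_trans (lex_pi hp _) _.
  by case/and3P: dw => _ aw _; rewrite all_rev.
by rewrite lexle_S.
Qed.

Lemma dir2 d u v : is_dsub d u -> Cset d (add1 u) v -> IncF (Cset d u) v.
Proof.
move=> du [dv le].
have du1 := dsub_add1 du.
have ex : exists n, n.+1 \notin v.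
  exists (\max_(x <- v) x); apply/negP => /max_ge; by rewrite ltnn.
case: (ex_minnP ex) => k hk kmin.
have inv j : 0 < j -> j <= k -> j \in v.
  move=> j0 jk; apply: contraT => jn.
  have := kmin j.-1; rewrite prednK // => /(_ jn); lia.
case/and3P: (dv) => sv av /eqP szv.
have vpos x : x \in v -> 0 < x by move/(allP av).
have vk x : x \in v -> x <= k \/ k.+2 <= x.
  move=> xv; case: (leqP x k) => h; [by left|right].
  have : x != k.+1 by apply: contraNneq hk => <-.
  lia.
pose pi j := if j <= k then j else j.+1.
pose f x := if x <= k then x else x.-1.
exists (map f v), pi.
have hpi : Inc1 pi.
  move=> j j1; rewrite /pi; case: (leqP j k) => h1; case: (leqP j.+1 k) => h2; split; lia.
have mv : map pi (map f v) = v.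
  rewrite -map_comp -[RHS]map_id; apply/eq_in_map => x xv /=.
  rewrite /pi /f; case: (vk x xv) => h.
    by rewrite h h.
  have -> : (x <= k) = false by apply/negbTE; rewrite -ltnNge; lia.
  have -> : (x.-1 <= k) = false by apply/negbTE; rewrite -ltnNge; lia.
  lia.
have dw : is_dsub d (map f v).
  apply/and3P; split.
  - apply: (@sorted_mono_in f (fun x => x \in v)); last exact: sv.
      2: by apply/allP.
    move=> a b av' bv' ab; rewrite /f.
    have := vk a av'; have := vk b bv'; have := vpos a av'.
    case: (leqP a k); case: (leqP b k); lia.
  - rewrite all_map; apply/allP => x xv /=; rewrite /f.
    have := vk x xv; have := vpos x xv; case: (leqP x k); lia.
  - by rewrite size_map szv.
split => //; split => //.
apply/(sq_le_lex dw du).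
move/(sq_le_lex dv du1): le => le.
case/and3P: (du) => su au /eqP szu.
rewrite -lexle_S map_rev -map_comp.
have -> : map (S \o f) v = map (gk k) v.
  apply/eq_in_map => x xv /=; rewrite /f /gk; case: (vk x xv) => h.
    by rewrite h.
  have -> : (x <= k) = false by apply/negbTE; rewrite -ltnNge; lia.
  lia.
rewrite map_rev.
rewrite /add1 -map_rev in le.
rewrite -!map_rev; apply: key; last exact: le.
- exact: sorted_rev_gtr.
- by rewrite all_rev.
- exact: sorted_rev_gtr.
- by rewrite all_rev.
- by rewrite !size_rev szv szu.
- move=> x xv xk j j0 jx; rewrite mem_rev; apply: inv => //; lia.
Qed.

Theorem lemma3p2 (d : nat) (u : seq nat) :
  1 <= d -> is_dsub d u ->
  forall v : seq nat, IncF (Cset d u) v <-> Cset d (add1 u) v.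
Proof.
move=> _ du v; split; [exact: dir1|exact: dir2].
Qed.
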